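(* If $p$ is a prime with $p \equiv 3 \pmod 4$, then $S_2(p)$ is infinite.
   Context: For a positive integer $m$, consider positive rational solutions $(x,y)$ of $x^y = y^{mx}$ with $x \neq 1$. For such a solution, $r = \log y / \log x$ is a positive rational number (so $y = x^r$); write $r = a/b$ with $a,b$ positive coprime integers. For an integer $k \ge 1$, $S_k(m)$ denotes the set of such solutions $(x,y)$ for which $|a-b| = k$. *)

(* Defs.v *)
From Stdlib Require Import Reals.
From mathcomp Require Import all_boot all_order all_algebra.
From mathcomp Require Import Rstruct.
From mathcomp Require Import classical_sets cardinality.

Set Implicit Arguments.
Unset Strict Implicit.
Unset Printing Implicit Defensive.

Definition Rq (q : rat) : R := ratr q.

Definition is_sol (m : nat) (x y : rat) : Prop :=
  (0 < x)%R /\ (0 < y)%R /\ x <> 1%R /\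
  Rpower (Rq x) (Rq y) = Rpower (Rq y) (INR m * Rq x).

Definition S (k m : nat) : set (rat * rat) :=
  [set s | is_sol m s.1 s.2 /\
     exists a b : nat, (0 < a)%N /\ (0 < b)%N /\ coprime a b /\
       Rdiv (ln (Rq s.2)) (ln (Rq s.1)) = Rdiv (INR a) (INR b) /\
       ((a - b) + (b - a))%N = k].

(* Main.v *)
Require Import Defs.
From Stdlib Require Import Reals.
From mathcomp Require Import all_boot all_order all_algebra.
From mathcomp Require Import Rstruct.
From mathcomp Require Import classical_sets cardinality.
From Stdlib Require Import ZArith Lia Lra Psatz List Classical.
From Stdlib Require Znumtheory.
From mathcomp Require Import zify.
Delimit Scope R_scope with Re.
Local Open Scope Z_scope.

Lemma pigeon {A B : Type} (f : A -> B) (l : list A) (r : list B) :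
  NoDup l -> (forall x, In x l -> In (f x) r) -> (length r < length l)%coq_nat ->
  exists x y, In x l /\ In y l /\ x <> y /\ f x = f y.
Proof.
  intros Hnd Hin Hlen.
  apply NNPP; intro Hc.
  assert (Hnd' : NoDup (List.map f l)).
  { apply NoDup_map_NoDup_ForallPairs; auto.
    intros x y Hx Hy Hf. apply NNPP; intro Hxy. apply Hc. exists x, y; auto. }
  assert (Hinc : incl (List.map f l) r).
  { intros b Hb. apply in_map_iff in Hb. destruct Hb as [x [<- Hx]]. auto. }
  pose proof (NoDup_incl_length Hnd' Hinc) as H.
  rewrite length_map in H. lia.
Qed.
Local Open Scope R_scope.
Lemma int_part_bounds (z : R) : (IZR (Int_part z) <= z < IZR (Int_part z) + 1).
Proof. pose proof (base_Int_part z). lra. Qed.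

Lemma dirichlet (p : Z) (Q : nat) : (0 < p)%Z -> (1 <= Q)%coq_nat ->
  exists X Y : Z, (1 <= Y <= Z.of_nat Q)%Z /\
    (Rabs (IZR X - IZR Y * sqrt (IZR p)) < / INR Q).
Proof.
  intros Hp HQ.
  set (s := sqrt (IZR p)).
  set (fr := fun y : nat => (INR y * s - IZR (Int_part (INR y * s)))).
  set (box := fun y : nat => Int_part (INR Q * fr y)).
  assert (HQr : (1 <= INR Q)) by (change 1 with (INR 1); apply le_INR; lia).
  assert (Hfr : forall y, (0 <= fr y < 1)).
  { intro y. unfold fr. pose proof (int_part_bounds (INR y * s)). lra. }
  assert (Hbox : forall y, (IZR (box y) <= INR Q * fr y < IZR (box y) + 1)).
  { intro y. apply int_part_bounds. }
  assert (Hbox2 : forall y, (0 <= box y < Z.of_nat Q)%Z).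
  { intro y. pose proof (Hbox y) as [H1 H2]. pose proof (Hfr y).
    split.
    - apply Z.lt_succ_r. apply lt_IZR. rewrite succ_IZR.
      assert (0 <= INR Q * fr y) by (apply Rmult_le_pos; lra). lra.
    - apply lt_IZR. rewrite -INR_IZR_INZ.
      assert (INR Q * fr y < INR Q).
      { rewrite -{2}(Rmult_1_r (INR Q)). apply Rmult_lt_compat_l; lra. }
      lra. }
  destruct (pigeon box (List.seq 0 (Q.+1)) (List.map Z.of_nat (List.seq 0 Q)))
    as [y1 [y2 [Hy1 [Hy2 [Hne Heq]]]]].
  - apply seq_NoDup.
  - intros y _. apply in_map_iff. exists (Z.to_nat (box y)).
    pose proof (Hbox2 y). split; [lia|]. apply in_seq. lia.
  - rewrite length_map !length_seq. lia.
  - apply in_seq in Hy1. apply in_seq in Hy2.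
    assert (Hkey : forall a b : nat, (a < b)%coq_nat -> (b <= Q)%coq_nat -> box a = box b ->
       exists X Y : Z, (1 <= Y <= Z.of_nat Q)%Z /\
         (Rabs (IZR X - IZR Y * s) < / INR Q)).
    { intros a b Hab HbQ Hb.
      exists (Int_part (INR b * s) - Int_part (INR a * s))%Z, (Z.of_nat (b - a)).
      split; [lia|].
      rewrite minus_IZR -INR_IZR_INZ minus_INR; [|lia].
      pose proof (Hbox a). pose proof (Hbox b). rewrite Hb in H.
      assert (E : (IZR (Int_part (INR b * s)) - IZR (Int_part (INR a * s)) -
                 (INR b - INR a) * s = fr a - fr b)) by (unfold fr; ring).
      rewrite E.
      assert (HQ0 : (0 < INR Q)) by lra.
      apply Rabs_def1.
      + apply (Rmult_lt_reg_l (INR Q)); [lra|]. rewrite Rinv_r; [nra|lra].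
      + apply (Rmult_lt_reg_l (INR Q)); [lra|].
        replace (INR Q * - / INR Q) with (-1) by (field; lra). nra. }
    destruct (Nat.lt_total y1 y2) as [H|[H|H]].
    + apply (Hkey y1 y2); auto; lia.
    + exfalso; auto.
    + apply (Hkey y2 y1); auto; lia.
Qed.
Local Open Scope Z_scope.

Lemma nonsq (p : Z) : Znumtheory.prime p -> forall x y : Z, y <> 0 -> x * x <> p * (y * y).
Proof.
  intros Hp.
  assert (Hp2 : 2 <= p) by (destruct Hp; lia).
  assert (H : forall n x y, Z.abs_nat y = n -> y <> 0 -> x * x <> p * (y * y)).
  { intro n. induction n as [n IH] using (well_founded_induction lt_wf).
    intros x y Hn Hy Hxy.
    assert (Hdx : (p | x)).
    { assert (Hd : (p | x * x)) by (exists (y * y); lia).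
      destruct (Znumtheory.prime_mult p Hp x x Hd); auto. }
    destruct Hdx as [x1 Hx1]. subst x.
    assert (E1 : p * (x1 * x1) = y * y).
    { apply (Z.mul_reg_l _ _ p); [lia|]. nia. }
    assert (Hdy : (p | y)).
    { assert (Hd : (p | y * y)) by (exists (x1 * x1); lia).
      destruct (Znumtheory.prime_mult p Hp y y Hd); auto. }
    destruct Hdy as [y1 Hy1]. subst y.
    assert (E2 : x1 * x1 = p * (y1 * y1)).
    { apply (Z.mul_reg_l _ _ p); [lia|]. nia. }
    assert (Hy1 : y1 <> 0) by (intro; subst; lia).
    apply (IH (Z.abs_nat y1)) with (x := x1) (y := y1); auto.
    rewrite <- Hn. rewrite Zabs2Nat.inj_mul. 
    assert (0 < Z.abs_nat y1)%coq_nat by lia.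
    assert (2 <= Z.abs_nat p)%coq_nat by lia. nia. }
  intros x y Hy. apply (H (Z.abs_nat y)); auto.
Qed.

Definition good (p K : Z) (q : Z * Z) : Prop :=
  1 <= fst q /\ 1 <= snd q /\ - K <= fst q * fst q - p * (snd q * snd q) <= K.

Definition delta (p : Z) (q : Z * Z) : R :=
  Rabs (IZR (fst q) - IZR (snd q) * sqrt (IZR p)).

Lemma delta_pos (p : Z) q : Znumtheory.prime p -> 1 <= snd q -> (0 < delta p q)%Re.
Proof.
  intros Hp Hq. destruct q as [X Y]. unfold delta; simpl in *.
  assert (Hp2 : 2 <= p) by (destruct Hp; lia).
  assert (Hpr : (0 <= IZR p)%Re) by (apply IZR_le; lia).
  pose proof (sqrt_sqrt (IZR p) Hpr) as Hs.
  apply Rabs_pos_lt. intro H.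
  apply (nonsq p Hp X Y); [lia|].
  apply eq_IZR. rewrite !mult_IZR.
  assert (IZR X = IZR Y * sqrt (IZR p))%Re by lra.
  rewrite H0. transitivity (IZR Y * IZR Y * (sqrt (IZR p) * sqrt (IZR p)))%Re; [ring|rewrite Hs; ring].
Qed.

Lemma step (p : Z) (d : R) : Znumtheory.prime p -> (0 < d)%Re ->
  exists q, good p (2 * p) q /\ (0 < delta p q < d)%Re.
Proof.
  intros Hp Hd.
  assert (Hp2 : 2 <= p) by (destruct Hp; lia).
  destruct (archimed_cor1 d Hd) as [Q [HQd HQ]].
  destruct (dirichlet p Q) as [X [Y [HY HX]]]; [lia|lia|].
  exists (X, Y).
  assert (Hpr : (2 <= IZR p)%Re) by (apply IZR_le; lia).
  set (s := sqrt (IZR p)) in *.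
  assert (Hs : (s * s = IZR p)%Re) by (apply sqrt_sqrt; lra).
  assert (Hs0 : (0 <= s)%Re) by apply sqrt_pos.
  assert (Hs1 : (1 <= s)%Re) by nra.
  assert (Hsp : (s <= IZR p)%Re) by nra.
  assert (HQr : (1 <= INR Q)%Re) by (change 1%Re with (INR 1); apply le_INR; lia).
  assert (HYr : (1 <= IZR Y <= INR Q)%Re).
  { rewrite INR_IZR_INZ. split; apply IZR_le; lia. }
  set (w := (/ INR Q)%Re) in *.
  assert (Hw : (w * INR Q = 1)%Re) by (unfold w; field; lra).
  assert (Hw0 : (0 < w)%Re) by (unfold w; apply Rinv_0_lt_compat; lra).
  set (e := (IZR X - IZR Y * s)%Re) in *.
  apply Rabs_def2 in HX. destruct HX as [HX1 HX2].
  assert (HYw : (IZR Y * w <= 1)%Re) by nra.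
  assert (Hw1 : (w <= 1)%Re) by nra.
  assert (HN : IZR (X * X - p * (Y * Y)) = (e * (e + 2 * IZR Y * s))%Re).
  { rewrite minus_IZR !mult_IZR. unfold e. rewrite <- Hs. ring. }
  assert (HNb : (- (2 * IZR p + 1) < IZR (X * X - p * (Y * Y)) < 2 * IZR p + 1)%Re).
  { rewrite HN.
    assert (Hee : (e * e < w)%Re) by nra.
    assert (Hey : (Rabs (e * (2 * IZR Y * s)) <= 2 * s)%Re).
    { rewrite Rabs_mult. rewrite (Rabs_pos_eq (2 * IZR Y * s)); [|nra].
      assert (Rabs e <= w)%Re by (apply Rabs_le; lra).
      assert (Rabs e * IZR Y <= w * IZR Y)%Re by (apply Rmult_le_compat_r; lra).
      assert (Rabs e * IZR Y <= 1)%Re by lra.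
      assert (Rabs e * IZR Y * s <= s)%Re by nra. nra. }
    pose proof (RRle_abs (e * (2 * IZR Y * s))%Re).
    pose proof (RRle_abs (- (e * (2 * IZR Y * s)))%Re). rewrite Rabs_Ropp in H0.
    assert (0 <= e * e)%Re by nra. split; nra. }
  assert (HNz : - (2 * p + 1) < X * X - p * (Y * Y) < 2 * p + 1).
  { destruct HNb as [H1 H2]. split; apply lt_IZR.
    - rewrite opp_IZR plus_IZR mult_IZR. exact H1.
    - rewrite plus_IZR mult_IZR. exact H2. }
  split.
  - unfold good; cbn [fst snd]. split; [|split; [lia|split; lia]].
    assert (HXr : (0 < IZR X)%Re) by (unfold e in *; nra).
    apply lt_IZR in HXr. lia.
  - split.
    + apply delta_pos; simpl; auto; lia.
    + unfold delta; simpl. fold s. fold e. apply Rabs_def1; lra.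
Qed.
Lemma many (p : Z) (N : nat) : Znumtheory.prime p ->
  exists l : list (Z * Z), length l = N /\ NoDup l /\ (forall q, In q l -> good p (2 * p) q) /\
    exists d, (0 < d)%Re /\ forall q, In q l -> (d <= delta p q)%Re.
Proof.
  intro Hp. induction N as [|N IH].
  - exists nil. split; [reflexivity|]. split; [constructor|]. split; [intros q []|].
    exists 1%Re. split; [lra| intros q []].
  - destruct IH as [l [Hl [Hnd [Hg [d [Hd Hdl]]]]]].
    destruct (step p d Hp Hd) as [q [Hq [Hq1 Hq2]]].
    exists (q :: l). split; [simpl; lia|]. split.
    + constructor; auto. intro Hin. specialize (Hdl q Hin). lra.
    + split.
      * intros q' [<-|Hin]; auto.
      * exists (delta p q). split; auto. intros q' [<-|Hin]; [lra|].
        specialize (Hdl q' Hin). lra.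
Qed.

Fixpoint fct (n : nat) : nat := match n with O => 1%nat | Datatypes.S m => (Datatypes.S m * fct m)%coq_nat end.

Lemma fct_pos n : (0 < fct n)%coq_nat.
Proof. induction n; simpl; lia. Qed.

Lemma fct_div (n k : nat) : (1 <= k)%coq_nat -> (k <= n)%coq_nat -> Nat.divide k (fct n).
Proof.
  induction n as [|n IH]; intros H1 H2; [lia|].
  destruct (Nat.eq_dec k (Datatypes.S n)) as [->|Hne].
  - exists (fct n). simpl. lia.
  - destruct (IH ltac:(lia) ltac:(lia)) as [c Hc]. exists ((Datatypes.S n * c)%coq_nat). simpl. rewrite Hc. lia.
Qed.

Definition zr (a : Z) (n : nat) : list Z := List.map (fun i => a + Z.of_nat i) (List.seq 0 n).

Lemma in_zr a n z : a <= z < a + Z.of_nat n -> In z (zr a n).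
Proof.
  intro H. apply in_map_iff. exists (Z.to_nat (z - a)). split; [lia|]. apply in_seq. lia.
Qed.

Lemma length_zr a n : length (zr a n) = n.
Proof. unfold zr. rewrite length_map length_seq. reflexivity. Qed.

Lemma pell (p : Z) : Znumtheory.prime p -> exists u v, 0 < u /\ 0 < v /\ u * u - p * (v * v) = 1.
Proof.
  intro Hp.
  assert (Hp2 : 2 <= p) by (destruct Hp; lia).
  set (Kn := Z.to_nat (2 * p)).
  set (Ln := fct Kn).
  set (L := Z.of_nat Ln).
  assert (HL : 0 < L) by (unfold L, Ln; pose proof (fct_pos Kn); lia).
  set (r := list_prod (zr (- (2 * p)) (Datatypes.S (2 * Kn))) (list_prod (zr 0 Ln) (zr 0 Ln))).
  set (f := fun q : Z * Z => (fst q * fst q - p * (snd q * snd q), (fst q mod L, snd q mod L))).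
  destruct (many p (Datatypes.S (length r)) Hp) as [l [Hl [Hnd [Hg _]]]].
  destruct (pigeon f l r Hnd) as [[X1 Y1] [[X2 Y2] [H1 [H2 [Hne Hf]]]]].
  - intros [X Y] Hin. specialize (Hg _ Hin). unfold good in Hg; cbn [fst snd] in Hg.
    unfold f, r; cbn [fst snd]. apply in_prod_iff. split.
    + apply in_zr. unfold Kn. lia.
    + apply in_prod_iff. split; apply in_zr; fold L;
        [pose proof (Z.mod_pos_bound X L HL) | pose proof (Z.mod_pos_bound Y L HL)]; lia.
  - lia.
  - pose proof (Hg _ H1) as G1. pose proof (Hg _ H2) as G2.
    unfold good in G1, G2; cbn [fst snd] in G1, G2.
    unfold f in Hf; cbn [fst snd] in Hf. injection Hf as Hn HX HY.
    remember (X1 * X1 - p * (Y1 * Y1)) as n eqn:Hn1.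
    assert (Hn0 : n <> 0).
    { intro Hz. apply (nonsq p Hp X1 Y1); [lia|]. lia. }
    assert (HnL : (n | L)).
    { apply Z.divide_abs_l. unfold L.
      destruct (fct_div Kn (Z.to_nat (Z.abs n))) as [c Hc]; [lia|unfold Kn; lia|].
      exists (Z.of_nat c). fold Ln in Hc. rewrite Hc. lia. }
    assert (HdX : (n | X1 - X2)).
    { apply (Z.divide_trans _ L); auto.
      exists (X1 / L - X2 / L).
      pose proof (Z.div_mod X1 L ltac:(lia)). pose proof (Z.div_mod X2 L ltac:(lia)). lia. }
    assert (HdY : (n | Y1 - Y2)).
    { apply (Z.divide_trans _ L); auto.
      exists (Y1 / L - Y2 / L).
      pose proof (Z.div_mod Y1 L ltac:(lia)). pose proof (Z.div_mod Y2 L ltac:(lia)). lia. }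
    destruct HdX as [al Hal]. destruct HdY as [be Hbe].
    set (u := 1 - X1 * al + p * Y1 * be).
    set (v := al * Y1 - X1 * be).
    assert (Hu : n * u = X1 * X2 - p * Y1 * Y2).
    { transitivity (n - X1 * (al * n) + p * Y1 * (be * n)); [unfold u; ring|].
      rewrite -Hal -Hbe Hn1. ring. }
    assert (Hv : n * v = X1 * Y2 - X2 * Y1).
    { transitivity ((al * n) * Y1 - X1 * (be * n)); [unfold v; ring|].
      rewrite -Hal -Hbe. ring. }
    assert (Hid : (X1 * X2 - p * Y1 * Y2) * (X1 * X2 - p * Y1 * Y2) - p * ((X1 * Y2 - X2 * Y1) * (X1 * Y2 - X2 * Y1))
       = (X1 * X1 - p * (Y1 * Y1)) * (X2 * X2 - p * (Y2 * Y2))) by ring.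
    assert (Hpell : u * u - p * (v * v) = 1).
    { apply (Z.mul_reg_l _ _ (n * n)); [nia|].
      assert (Hid' : (n*u)*(n*u) - p*((n*v)*(n*v)) = n*n).
      { rewrite Hu Hv Hid -Hn1 Hn. reflexivity. }
      rewrite Z.mul_1_r -[RHS]Hid'. ring. }
    assert (Hv0 : v <> 0).
    { intro Hv0. rewrite Hv0 in Hv.
      assert (Hc : X1 * Y2 = X2 * Y1) by lia.
      assert (E : (X1*X1 - p*(Y1*Y1))*(Y2*Y2) - (X2*X2 - p*(Y2*Y2))*(Y1*Y1)
                  = (X1*Y2)*(X1*Y2) - (X2*Y1)*(X2*Y1)) by ring.
      rewrite Hc -Hn1 -Hn in E.
      assert (E2 : n * ((Y2 - Y1) * (Y2 + Y1)) = 0) by (rewrite Z.sub_diag in E; rewrite -E; ring).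
      apply Z.mul_eq_0 in E2. destruct E2 as [E2|E2]; [lia|].
      apply Z.mul_eq_0 in E2. destruct E2 as [E2|E2]; [|lia].
      assert (Y1 = Y2) by lia. subst Y2.
      assert (X1 = X2) by (apply (Z.mul_reg_r _ _ Y1); lia). subst X2. auto. }
    exists (Z.abs u), (Z.abs v). split; [|split]; [|lia|].
    + destruct (Z.eq_dec u 0) as [E|E]; [|lia]. rewrite E in Hpell. nia.
    + rewrite -Hpell. destruct (Z.abs_eq_or_opp u) as [E|E]; destruct (Z.abs_eq_or_opp v) as [E'|E']; rewrite E E'; ring.
Qed.
Local Open Scope Z_scope.
Lemma sq_of_coprime (a b w : Z) : 0 < a -> 0 < b -> Z.gcd a b = 1 -> a * b = w * w ->
  exists s, a = s * s.
Proof.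
  intros Ha Hb Hab Hw.
  set (g := Z.gcd a w).
  assert (Hg0 : 0 <= g) by apply Z.gcd_nonneg.
  assert (Hg : g <> 0).
  { intro E. apply Z.gcd_eq_0_l in E. lia. }
  destruct (Z.gcd_divide_l a w) as [a1 Ha1]. fold g in Ha1.
  destruct (Z.gcd_divide_r a w) as [w1 Hw1]. fold g in Hw1.
  assert (Hgw : Z.gcd a1 w1 = 1).
  { pose proof (Z.gcd_mul_mono_r a1 w1 g) as E. rewrite -Ha1 -Hw1 in E. fold g in E.
    rewrite Z.abs_eq in E; [|lia]. nia. }
  assert (Ha1p : 0 < a1) by nia.
  assert (E1 : a1 * b = (w1 * w1) * g).
  { apply (Z.mul_reg_l _ _ g); [lia|]. rewrite Ha1 Hw1 in Hw. nia. }
  assert (Hd : (a1 | g)).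
  { apply (Znumtheory.Gauss a1 (w1 * w1) g).
    - exists b. lia.
    - apply Znumtheory.rel_prime_mult; apply Znumtheory.Zgcd_1_rel_prime; auto. }
  destruct Hd as [c Hc].
  assert (Hb1 : b = w1 * w1 * c).
  { apply (Z.mul_reg_l _ _ a1); [lia|]. rewrite E1 Hc. ring. }
  assert (Hc1 : c = 1).
  { assert (Hcd : (c | Z.gcd a b)).
    { apply Z.gcd_greatest.
      - exists (a1 * a1). rewrite Ha1 Hc. ring.
      - exists (w1 * w1). rewrite Hb1. ring. }
    rewrite Hab in Hcd. apply Z.divide_1_r_nonneg; auto. nia. }
  exists a1. rewrite Ha1 Hc Hc1. ring.
Qed.

Lemma split_p (p a b w : Z) : Znumtheory.prime p -> 0 < a -> 0 < b -> Z.gcd a b = 1 -> a * b = p * (w * w) ->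
  (exists s t, a = s * s /\ b = p * (t * t)) \/ (exists s t, a = p * (s * s) /\ b = t * t).
Proof.
  intros Hp Ha Hb Hab Hw.
  assert (Hp2 : 2 <= p) by (destruct Hp; lia).
  assert (Hd : (p | a * b)) by (exists (w * w); lia).
  destruct (Znumtheory.prime_mult p Hp a b Hd) as [[a1 Ha1]|[b1 Hb1]].
  - right. subst a.
    assert (E : a1 * b = w * w) by (apply (Z.mul_reg_l _ _ p); [lia|]; nia).
    assert (Ha1p : 0 < a1) by nia.
    assert (G : Z.gcd a1 b = 1).
    { assert (Hcd : (Z.gcd a1 b | Z.gcd (a1 * p) b)).
      { apply Z.gcd_greatest.
        - apply Z.divide_mul_l. apply Z.gcd_divide_l.
        - apply Z.gcd_divide_r. }
      rewrite Hab in Hcd. apply Z.divide_1_r_nonneg; auto. apply Z.gcd_nonneg. }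
    destruct (sq_of_coprime a1 b w Ha1p Hb G E) as [s Hs].
    destruct (sq_of_coprime b a1 w Hb Ha1p ltac:(rewrite Z.gcd_comm; auto) ltac:(lia)) as [t Ht].
    exists s, t. split; [rewrite Hs; ring|auto].
  - left. subst b.
    assert (E : a * b1 = w * w) by (apply (Z.mul_reg_l _ _ p); [lia|]; nia).
    assert (Hb1p : 0 < b1) by nia.
    assert (G : Z.gcd a b1 = 1).
    { assert (Hcd : (Z.gcd a b1 | Z.gcd a (b1 * p))).
      { apply Z.gcd_greatest.
        - apply Z.gcd_divide_l.
        - apply Z.divide_mul_l. apply Z.gcd_divide_r. }
      rewrite Hab in Hcd. apply Z.divide_1_r_nonneg; auto. apply Z.gcd_nonneg. }
    destruct (sq_of_coprime a b1 w Ha Hb1p G E) as [s Hs].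
    destruct (sq_of_coprime b1 a w Hb1p Ha ltac:(rewrite Z.gcd_comm; auto) ltac:(lia)) as [t Ht].
    exists s, t. split; [auto|rewrite Ht; ring].
Qed.

Lemma gcd_consec (k : Z) : Z.gcd k (k + 1) = 1.
Proof.
  assert (H : (Z.gcd k (k + 1) | 1)).
  { replace 1 with ((k + 1) - k) at 2 by ring. apply Z.divide_sub_r; [apply Z.gcd_divide_r|apply Z.gcd_divide_l]. }
  apply Z.divide_1_r_nonneg; auto. apply Z.gcd_nonneg.
Qed.

Lemma gcd_odd2 (k : Z) : Z.gcd (2 * k - 1) (2 * k + 1) = 1.
Proof.
  set (g := Z.gcd (2 * k - 1) (2 * k + 1)).
  assert (H : (g | 2)).
  { replace 2 with ((2 * k + 1) - (2 * k - 1)) by ring. apply Z.divide_sub_r; [apply Z.gcd_divide_r|apply Z.gcd_divide_l]. }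
  assert (Hg0 : 0 <= g) by apply Z.gcd_nonneg.
  assert (Hg1 : g <> 0).
  { intro E. apply Z.gcd_eq_0_l in E. lia. }
  assert (Hg2 : g <= 2) by (apply Z.divide_pos_le; auto; lia).
  assert (g <> 2).
  { intro E. destruct (Z.gcd_divide_l (2 * k - 1) (2 * k + 1)) as [m Hm]. fold g in Hm. lia. }
  lia.
Qed.

Definition pm2 (p s t : Z) : Prop := s * s - p * (t * t) = 2 \/ s * s - p * (t * t) = -2.

Lemma fund (p : Z) : Znumtheory.prime p -> p mod 4 = 3 ->
  forall n u v, Z.to_nat v = n -> 0 < u -> 0 < v -> u * u - p * (v * v) = 1 ->
  exists s t, 0 < s /\ 0 < t /\ pm2 p s t.
Proof.
  intros Hp Hp4.
  assert (Hp2 : 2 <= p) by (destruct Hp; lia).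
  pose proof (Z.div_mod p 4 ltac:(lia)) as Hpm. rewrite Hp4 in Hpm. set (m := p / 4) in Hpm. clearbody m.
  intro n. induction n as [n IH] using (well_founded_induction lt_wf).
  intros u v Hn Hu Hv Huv.
  assert (Hu2 : 2 <= u) by nia.
  destruct (Z.Even_or_Odd u) as [[k Hk]|[k Hk]].
  -
    assert (E : (2 * k - 1) * (2 * k + 1) = p * (v * v)) by (subst u; lia).
    destruct (split_p p (2 * k - 1) (2 * k + 1) v Hp ltac:(lia) ltac:(lia) (gcd_odd2 k) E)
      as [[s [t [Hs Ht]]]|[s [t [Hs Ht]]]].
    + assert (s <> 0) by (intro; subst; lia).
      assert (t <> 0) by (intro; subst; lia).
      exists (Z.abs s), (Z.abs t).
      split; [lia|split; [lia|]]. right. unfold pm2. rewrite !Z.abs_square. lia.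
    + assert (s <> 0) by (intro; subst; lia).
      assert (t <> 0) by (intro; subst; lia).
      exists (Z.abs t), (Z.abs s).
      split; [lia|split; [lia|]]. left. unfold pm2. rewrite !Z.abs_square. lia.
  -
    assert (Hk1 : 1 <= k) by lia.
    destruct (Z.Even_or_Odd v) as [[w Hw]|[w Hw]].
    2:{ exfalso. subst u v. rewrite Hpm in Huv. lia. }
    subst v.
    assert (E : k * (k + 1) = p * (w * w)) by (subst u; nia).
    destruct (split_p p k (k + 1) w Hp ltac:(lia) ltac:(lia) (gcd_consec k) E)
      as [[s [t [Hs Ht]]]|[s [t [Hs Ht]]]].
    + exfalso. rewrite Hs in Ht. rewrite Hpm in Ht.
      destruct (Z.Even_or_Odd s) as [[a Ha]|[a Ha]]; destruct (Z.Even_or_Odd t) as [[b Hb]|[b Hb]];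
        subst s t; lia.
    + assert (s <> 0) by (intro; subst; lia).
      assert (t <> 0) by (intro; subst; lia).
      assert (Hs0 : 0 < Z.abs s) by lia.
      assert (Ht0 : 0 < Z.abs t) by lia.
      assert (Hw0 : 0 < w) by lia.
      assert (Hw : w = Z.abs s * Z.abs t).
      { assert (E2 : w * w = (Z.abs s * Z.abs t) * (Z.abs s * Z.abs t)).
        { apply (Z.mul_reg_l _ _ p); [lia|].
          rewrite -E Ht Hs.
          transitivity (p * ((Z.abs s * Z.abs s) * (Z.abs t * Z.abs t))); [|ring].
          rewrite !Z.abs_square. ring. }
        assert (E3 : (w - Z.abs s * Z.abs t) * (w + Z.abs s * Z.abs t) = 0) by (rewrite Z.mul_sub_distr_r !Z.mul_add_distr_l E2; ring).
        apply Z.mul_eq_0 in E3. destruct E3 as [E3|E3]; [lia|].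
        assert (0 < Z.abs s * Z.abs t) by (apply Z.mul_pos_pos; lia). lia. }
      apply (IH (Z.to_nat (Z.abs s))) with (u := Z.abs t) (v := Z.abs s); auto.
      * rewrite -Hn. subst w.
        assert (Z.abs s <= Z.abs s * Z.abs t) by (rewrite -{1}(Z.mul_1_r (Z.abs s)); apply Z.mul_le_mono_nonneg_l; lia).
        lia.
      * rewrite !Z.abs_square. lia.
Qed.
Local Open Scope Z_scope.
Definition nxt (p u v : Z) (q : Z * Z) : Z * Z :=
  (fst q * u + p * snd q * v, fst q * v + snd q * u).

Fixpoint itst (p u v : Z) (q0 : Z * Z) (n : nat) : Z * Z :=
  match n with O => q0 | Datatypes.S n => nxt p u v (itst p u v q0 n) end.

Lemma itst_props (p u v : Z) q0 : 0 < p -> 0 < u -> 0 < v -> u * u - p * (v * v) = 1 ->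
  0 < fst q0 -> 0 < snd q0 -> forall n,
  0 < fst (itst p u v q0 n) /\ 0 < snd (itst p u v q0 n) /\
  fst (itst p u v q0 n) * fst (itst p u v q0 n) - p * (snd (itst p u v q0 n) * snd (itst p u v q0 n))
    = fst q0 * fst q0 - p * (snd q0 * snd q0) /\
  snd (itst p u v q0 n) < snd (itst p u v q0 (Datatypes.S n)).
Proof.
  intros Hp Hu Hv Huv Hs Ht n. induction n as [|n IH].
  - simpl. split; auto. split; auto. split; auto. nia.
  - destruct IH as [H1 [H2 [H3 H4]]].
    change (itst p u v q0 (Datatypes.S n)) with (nxt p u v (itst p u v q0 n)) in *.
    change (itst p u v q0 (Datatypes.S (Datatypes.S n))) with (nxt p u v (nxt p u v (itst p u v q0 n))).
    destruct (itst p u v q0 n) as [s t]. cbn [nxt fst snd] in *.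
    split; [nia|]. split; [nia|]. split.
    + rewrite -H3. transitivity ((s * s - p * (t * t)) * (u * u - p * (v * v))); [ring|]. rewrite Huv. ring.
    + nia.
Qed.

Lemma itst_mono (p u v : Z) q0 : 0 < p -> 0 < u -> 0 < v -> u * u - p * (v * v) = 1 ->
  0 < fst q0 -> 0 < snd q0 -> forall n m, (n < m)%coq_nat ->
  snd (itst p u v q0 n) < snd (itst p u v q0 m).
Proof.
  intros Hp Hu Hv Huv Hs Ht n m Hnm. induction m as [|m IH]; [lia|].
  pose proof (itst_props p u v q0 Hp Hu Hv Huv Hs Ht m) as [_ [_ [_ H]]].
  destruct (Nat.eq_dec n m) as [->|Hne]; auto.
  specialize (IH ltac:(lia)). lia.
Qed.
Import Order.TTheory GRing.Theory Num.Theory.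

Lemma inS (pN : nat) (q : rat) (a b : nat) :
  (0 < q)%R -> q != 1%R -> (0 < a)%nat -> (0 < b)%nat -> coprime a b -> ((a - b) + (b - a) = 2)%nat ->
  (q ^+ a * b%:R = pN%:R * a%:R * q ^+ b)%R -> S 2 pN (q ^+ b, q ^+ a)%R.
Proof.
  move=> q0 q1 a0 b0 cop d2 E.
  set r := Rq q.
  have r0 : (0 < r)%R by rewrite /r /Rq -(rmorph0 (@ratr R)) ltr_rat.
  have r1 : r <> 1%R.
  { move=> h. move/eqP: q1; apply. apply/eqP. rewrite -(fmorph_eq1 (@ratr R)). by apply/eqP. }
  have r0s : (0 < r)%Re by apply/RltP.
  have ER : (r ^ a * INR b = INR pN * INR a * r ^ b)%Re.
  { rewrite !RpowE !INRE !RmultE.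
    have := congr1 (@ratr R) E. by rewrite !rmorphM !rmorphXn !rmorph_nat. }
  have Eb : Rq (q ^+ b) = (r ^ b)%Re by rewrite /Rq rmorphXn -RpowE.
  have Ea : Rq (q ^+ a) = (r ^ a)%Re by rewrite /Rq rmorphXn -RpowE.
  have lr : ln r <> 0%Re.
  { move=> h. apply: r1. apply: ln_inv => //. apply/RltP. exact: ltr01. by rewrite h ln_1. }
  have b0r : INR b <> 0%Re by apply: not_0_INR; lia.
  split.
  - split; [by rewrite exprn_gt0|]. split; [by rewrite exprn_gt0|]. split.
    + by move/eqP; rewrite pexpr_eq1 ?ltW // (negbTE q1).
    + rewrite /= Ea Eb /Rpower. f_equal. rewrite !ln_pow //.
      transitivity ((r ^ a * INR b) * ln r)%Re; [ring|]. rewrite ER. ring.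
  - exists a, b. split; [done|]. split; [done|]. split; [done|]. split; [|done].
    rewrite /= Ea Eb !ln_pow //. field. split; auto.
Qed.

Close Scope Z_scope. Close Scope R_scope.
Import Order.TTheory GRing.Theory Num.Theory.

Lemma Zprime_of (p : nat) : prime p -> Znumtheory.prime (Z.of_nat p).
Proof.
  move=> pp. have p1 := prime_gt1 pp.
  apply: Znumtheory.prime_intro; first lia.
  move=> n Hn. apply/Znumtheory.Zgcd_1_rel_prime.
  set g := Z.gcd n (Z.of_nat p).
  have g0 : (0 <= g)%Z by apply: Z.gcd_nonneg.
  have gn : (g | n)%Z by apply: Z.gcd_divide_l.
  have gp : (g | Z.of_nat p)%Z by apply: Z.gcd_divide_r.
  have gnz : g <> 0%Z.
  { move=> E. apply Z.gcd_eq_0_l in E. lia. }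
  have gle : (g <= n)%Z := Z.divide_pos_le g n ltac:(lia) gn.
  case: gp => c Hc.
  have c0 : (0 <= c)%Z by nia.
  have hd : (Z.to_nat g %| p)%nat.
  { apply/dvdnP. exists (Z.to_nat c). apply: Nat2Z.inj. rewrite Hc. 
    rewrite -[muln _ _]/(Nat.mul _ _) Nat2Z.inj_mul !Z2Nat.id //. }
  case/primeP: pp => _ /(_ _ hd) /orP [/eqP g1 | /eqP gp']; lia.
Qed.
From mathcomp Require Import ring lra.
Import Order.TTheory GRing.Theory Num.Theory.

Lemma nat_eo (n : nat) : exists k, n = (2 * k)%nat \/ n = (2 * k + 1)%nat.
Proof.
  destruct (Nat.Even_or_Odd n) as [[k Hk]|[k Hk]]; exists k; [left|right]; lia.
Qed.

Lemma odd_of (n k : nat) : n = (2 * k + 1)%nat -> odd n.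
Proof. by move=> ->; rewrite oddD oddM. Qed.

Definition Fst (p : nat) (sg : bool) (s t : nat) : rat * rat :=
  let q : rat := if sg then (s%:R / t%:R)%R else (t%:R / s%:R)%R in
  let a := (s * s)%nat in let b := (p * (t * t))%nat in
  ((q ^+ b)%R, (q ^+ a)%R).

Lemma pair_in (p : nat) (sg : bool) (s t : nat) : odd p -> (2 < p)%nat -> (0 < s)%nat -> (1 < t)%nat ->
  (if sg then (s * s = p * (t * t) + 2)%nat else (s * s + 2 = p * (t * t))%nat) ->
  S 2 p (Fst p sg s t) /\
  ((Fst p sg s t).2 * (p * (t * t))%:R = p%:R * (s * s)%:R * (Fst p sg s t).1)%R.
Proof.
  move=> po p2 s0 t1 H.
  have sR : (s%:R : rat) != 0%R by rewrite pnatr_eq0 -lt0n.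
  have tR : (t%:R : rat) != 0%R by rewrite pnatr_eq0; lia.
  have aR : ((s * s)%:R : rat) = (s%:R * s%:R)%R by rewrite natrM.
  have bR : ((p * (t * t))%:R : rat) = (p%:R * (t%:R * t%:R))%R by rewrite !natrM.
  rewrite /Fst.
  suff [q0 q1 cop key] : [/\ (0 < (if sg then (s%:R / t%:R)%R else (t%:R / s%:R)%R) :> rat)%R,
     (if sg then (s%:R / t%:R)%R else (t%:R / s%:R)%R) != 1%R :> rat,
     coprime (s * s) (p * (t * t)) &
     (((if sg then (s%:R / t%:R)%R else (t%:R / s%:R)%R) : rat) ^+ (s * s) * (p * (t * t))%:R =
       p%:R * (s * s)%:R * (if sg then (s%:R / t%:R)%R else (t%:R / s%:R)%R) ^+ (p * (t * t)))%R].
  { split; [|exact key]. apply: inS => //; try lia.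
    clear q0 q1 key. by case: sg H => /= H; lia. }
  case: sg H => H.
  - have hab : (s * s = p * (t * t) + 2)%nat := H.
    have st : s != t by apply/eqP => E; subst s; nia.
    split.
    + by rewrite divr_gt0 // ltr0n; lia.
    + apply/eqP => E. move/eqP: st; apply.
      have E2 : (s%:R = t%:R :> rat)%R by rewrite -(divfK tR (s%:R)%R) E mul1r.
      by apply/eqP; rewrite -(eqr_nat rat) E2.
    + rewrite hab /coprime gcdnC gcdnDl. rewrite -/(coprime _ 2) coprimen2 oddM po /=.
      have [k [Hk|Hk]] := nat_eo t.
      * exfalso. have [j [Hj|Hj]] := nat_eo s; subst s t; lia.
      * by rewrite oddM (odd_of _ _ Hk).
    + rewrite {1}hab exprD aR bR. field. by rewrite tR.
  - have hba : (p * (t * t) = s * s + 2)%nat by lia.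
    have st : t != s by apply/eqP => E; subst t; nia.
    split.
    + by rewrite divr_gt0 // ltr0n; lia.
    + apply/eqP => E. move/eqP: st; apply.
      have E2 : (t%:R = s%:R :> rat)%R by rewrite -(divfK sR (t%:R)%R) E mul1r.
      by apply/eqP; rewrite -(eqr_nat rat) E2.
    + rewrite hba /coprime gcdnDl. rewrite -/(coprime _ 2) coprimen2 oddM.
      have [k [Hk|Hk]] := nat_eo s.
      * exfalso. have [j [Hj|Hj]] := nat_eo t; subst s t; lia.
      * by rewrite (odd_of _ _ Hk).
    + rewrite {2}hba exprD aR bR. field. by rewrite sR.
Qed.
Lemma Fst_inj (p : nat) (sg : bool) (s1 t1 s2 t2 : nat) : odd p -> (2 < p)%nat ->
  (0 < s1)%nat -> (1 < t1)%nat -> (0 < s2)%nat -> (1 < t2)%nat ->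
  (if sg then (s1 * s1 = p * (t1 * t1) + 2)%nat else (s1 * s1 + 2 = p * (t1 * t1))%nat) ->
  (if sg then (s2 * s2 = p * (t2 * t2) + 2)%nat else (s2 * s2 + 2 = p * (t2 * t2))%nat) ->
  Fst p sg s1 t1 = Fst p sg s2 t2 -> t1 = t2.
Proof.
  move=> po p2 s10 t11 s20 t21 H1 H2 E.
  have [S1 K1] := pair_in _ _ _ _ po p2 s10 t11 H1.
  have [S2 K2] := pair_in _ _ _ _ po p2 s20 t21 H2.
  rewrite E in K1 S1.
  move: K1 K2. set x := (Fst p sg s2 t2).1. set y := (Fst p sg s2 t2).2. move=> K1 K2.
  case: S1 => [[x0 [y0 _]] _]. rewrite -/x -/y in x0 y0.
  have yn : y != 0%R by rewrite gt_eqF.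
  have pxn : (p%:R * x)%R != 0%R :> rat by rewrite mulf_neq0 // ?gt_eqF // ltr0n; lia.
  have E1 : ((p * (t1 * t1) * (s2 * s2))%:R = (p * (t2 * t2) * (s1 * s1))%:R :> rat)%R.
  { rewrite !natrM. apply: (mulIf pxn). apply: (mulfI yn).
    transitivity ((y * (p * (t1 * t1))%:R) * ((s2 * s2)%:R * (p%:R * x)))%R; first by rewrite !natrM; ring.
    rewrite K1.
    transitivity ((y * (p * (t2 * t2))%:R) * ((s1 * s1)%:R * (p%:R * x)))%R; last by rewrite !natrM; ring.
    rewrite K2. ring. }
  move/eqP: E1; rewrite eqr_nat => /eqP E1.
  clear -E1 H1 H2 p2 t11 t21.
  apply/eqP. rewrite -eqn_sqr. apply/eqP.
  move: E1 H1 H2. rewrite !mulnn. move: (expn t1 2) (expn t2 2) (expn s1 2) (expn s2 2) => A B X Y.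
  move=> E1 H1 H2.
  have pAB : (p * A = p * B)%nat.
  { case: sg H1 H2 => /= H1 H2.
    - rewrite H1 H2 !mulnDr in E1. lia.
    - rewrite -H1 -H2. rewrite -H1 -H2 !mulnDl in E1. lia. }
  apply/eqP. by rewrite -(eqn_pmul2l (_ : 0 < p)%nat) ?pAB //; lia.
Qed.

Theorem lemma6_aux (p : nat) :
  prime p -> p %% 4 = 3 -> ~ finite_set (S 2 p).
Proof.
  move=> pp p4.
  have Pp := Zprime_of p pp.
  have p1 := prime_gt1 pp.
  have pd := divn_eq p 4. rewrite p4 in pd.
  have P4 : (Z.of_nat p mod 4 = 3)%Z.
  { rewrite pd. set k := p %/ 4. clearbody k. rewrite -[(k * 4 + 3)%nat]/(Nat.add (Nat.mul k 4) 3) Nat2Z.inj_add Nat2Z.inj_mul. rewrite Z.add_comm Z_mod_plus_full. reflexivity. }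
  have po : odd p by apply: (odd_of _ (2 * (p %/ 4) + 1)); lia.
  have p2 : (2 < p)%nat by lia.
  have [u [v [Hu [Hv Huv]]]] := pell (Z.of_nat p) Pp.
  have [s0 [t0 [Hs0 [Ht0 Hpm]]]] := fund (Z.of_nat p) Pp P4 _ u v erefl Hu Hv Huv.
  have HP : (0 < Z.of_nat p)%Z by lia.
  pose it := itst (Z.of_nat p) u v (s0, t0).
  have Hprops := itst_props (Z.of_nat p) u v (s0, t0) HP Hu Hv Huv Hs0 Ht0.
  have Hmono := itst_mono (Z.of_nat p) u v (s0, t0) HP Hu Hv Huv Hs0 Ht0.
  pose sg := (s0 * s0 - Z.of_nat p * (t0 * t0) =? 2)%Z.
  pose g := fun n : nat => (Z.to_nat (fst (it n.+1)), Z.to_nat (snd (it n.+1))).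
  have Hg : forall n, (0 < (g n).1)%nat /\ (1 < (g n).2)%nat /\
     (if sg then ((g n).1 * (g n).1 = p * ((g n).2 * (g n).2) + 2)%nat
      else ((g n).1 * (g n).1 + 2 = p * ((g n).2 * (g n).2))%nat).
  { move=> n. have [A [B [Cn _]]] := Hprops n.+1.
    have M := Hmono 0%nat n.+1 ltac:(lia).
    rewrite /g. cbn [fst snd]. change (itst (Z.of_nat p) u v (s0, t0) 0) with (s0, t0) in M.
    rewrite -/it in M A B Cn. cbn [fst snd] in M, Cn.
    set s := fst (it n.+1) in A Cn *. set t := snd (it n.+1) in B Cn M *.
    split; first lia. split; first lia.
    have Es : s = Z.of_nat (Z.to_nat s) by lia.
    have Et : t = Z.of_nat (Z.to_nat t) by lia.
    rewrite Es Et in Cn.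
    rewrite /sg. case: Hpm => /= Hn; rewrite Hn /=; lia. }
  pose f := fun n => Fst p sg (g n).1 (g n).2.
  have fS : forall n, S 2 p (f n).
  { move=> n. have [A [B C]] := Hg n. by have [] := pair_in _ _ _ _ po p2 A B C. }
  have finj : injective f.
  { move=> n m E. have [A [B C]] := Hg n. have [A' [B' C']] := Hg m.
    have Et := Fst_inj _ _ _ _ _ _ po p2 A B A' B' C C' E.
    rewrite /g in Et; cbn [fst snd] in Et.
    have [_ [P1 _]] := Hprops n.+1. have [_ [P2 _]] := Hprops m.+1.
    rewrite -/it in P1 P2.
    have [Hl|[Hl|Hl]] := Nat.lt_total n m; last first.
    - have := Hmono m.+1 n.+1 ltac:(lia). rewrite -/it. lia.
    - done.
    - have := Hmono n.+1 m.+1 ltac:(lia). rewrite -/it. lia. }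
  move=> fin.
  have H := finite_preimage (f := f) (B := S 2 p) (fun x y _ _ => @finj x y) fin.
  apply: (infinite_nat). apply: (sub_finite_set _ H).
  by move=> n _; apply: fS.
Qed.

Theorem lemma6 (p : nat) :
  prime p -> p %% 4 = 3 -> ~ finite_set (S 2 p).
Proof.
  exact (lemma6_aux p).
Qed.
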